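(* Let $n\ge3$ and $0\le k\le n-2$ be integers. Then the polynomial $a_{n,k}$ has total degree exactly $2+k$.
   Context: Let $T_1,T_2,\dots$ be indeterminates. Define linear operators $L,H$ on monomials (constants sent to $0$): $L(T_{\alpha_1}\cdots T_{\alpha_r})=\sum_{1\le i<j\le r}T_{\alpha_1}\cdots T_{\alpha_i+1}\cdots T_{\alpha_j+1}\cdots T_{\alpha_r}$, $H(T_{\alpha_1}\cdots T_{\alpha_r})=-\frac12\sum_{k=1}^{r}\sum_{l=1}^{\alpha_k-1}\binom{\alpha_k}{l}T_{1+l}T_{1+\alpha_k-l}\prod_{i\ne k}T_{\alpha_i}$. For $n\ge2$ let $A_n=-\sum_{k=1}^{n-1}\binom{n}{k}T_{1+k}T_{1+n-k}T_n$; set $R_2=0$, $R_{n+1}=A_n+L(R_n)+H(R_n)$. For $0\le k\le n-2$, $a_{n,k}$ denotes the polynomial obtained by taking all monomials of $R_{n+1}$ (with their coefficients) whose largest variable index is $n-k$ and dividing them by $T_{n-k}$, so that $R_{n+1}=\sum_{k=0}^{n-2}a_{n,k}T_{n-k}$. *)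

(* Defs.v *)
From HB Require Import structures.
From mathcomp Require Import all_boot all_order all_algebra.
From mathcomp Require Import finmap.
From mathcomp Require Import monalg.
Set Implicit Arguments.
Unset Strict Implicit.
Unset Printing Implicit Defensive.
Import GRing.Theory.
Local Open Scope ring_scope.

(* The polynomial ring Q[T_0, T_1, T_2, ...]; only T_1, T_2, ... are used. *)
Definition poly := {malg rat[cmonom nat]}.

Definition monom_of (s : seq nat) : cmonom nat :=
  foldr (fun i m => mulcm (ucm i) m) (onecm nat) s.

Definition idx_of (m : cmonom nat) : seq nat :=
  flatten [seq nseq (m i) i | i <- finsupp m].

Definition T_ (s : seq nat) : poly := << monom_of s >>.

Definition T (i : nat) : poly := T_ [:: i].

Definition incr_at (s : seq nat) (i : nat) : seq nat :=
  set_nth 0%N s i (nth 0%N s i).+1.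

Definition L_mon (s : seq nat) : poly :=
  \sum_(i < size s) \sum_(j < size s | (i < j)%N) T_ (incr_at (incr_at s i) j).

Definition H_mon (s : seq nat) : poly :=
  (- (1 / 2%:R)) *:
    \sum_(k < size s)
      \sum_(1 <= l < nth 0%N s k)
        ('C(nth 0%N s k, l))%:R *:
          T_ ((1 + l)%N :: (1 + (nth 0%N s k - l))%N :: (take k s ++ drop k.+1 s)).

Definition Lop (p : poly) : poly :=
  \sum_(m <- msupp p) p@_m *: L_mon (idx_of m).
Definition Hop (p : poly) : poly :=
  \sum_(m <- msupp p) p@_m *: H_mon (idx_of m).

Definition A (n : nat) : poly :=
  - \sum_(1 <= k < n) ('C(n, k))%:R *: (T (1 + k) * T (1 + (n - k)) * T n).

(* R_2 = 0, R_{n+1} = A_n + L(R_n) + H(R_n) for n >= 2 (R_0, R_1 unused, set to 0) *)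
Fixpoint R (n : nat) : poly :=
  match n with
  | 0 => 0
  | m.+1 => if (m < 2)%N then 0 else A m + Lop (R m) + Hop (R m)
  end.

(* largest variable index occurring in a monomial (0 for the constant monomial) *)
Definition maxidx (m : cmonom nat) : nat := \max_(i <- finsupp m) i.

Definition a (n k : nat) : poly :=
  \sum_(m <- msupp (R n.+1) | maxidx m == (n - k)%N)
     << (R n.+1)@_m *g divcm m (ucm (n - k)%N) >>.

(* total degree of a polynomial: max degree of a monomial in its support
   (msize p = 1 + total degree for p != 0, msize 0 = 0) *)
Definition totdeg (p : poly) : nat := (msize p).-1.

(* Main.v *)
Require Import Defs.
From mathcomp Require Import all_boot all_order all_algebra finmap monalg.
From mathcomp Require Import zify ring lra.
Import GRing.Theory Num.Theory Order.TTheory.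
Set Implicit Arguments.
Unset Strict Implicit.
Unset Printing Implicit Defensive.

Lemma monom_ofE s i : monom_of s i = count_mem i s.
Proof.
elim: s => [|x s IH] /=; first by rewrite onecmE.
by rewrite mulcmE ucmE IH.
Qed.

Lemma monom_of_count s1 s2 : (forall i, count_mem i s1 = count_mem i s2) -> monom_of s1 = monom_of s2.
Proof. by move=> H; apply/eqP/cmP=> i; rewrite !monom_ofE H. Qed.

Lemma count_idx_of m i : count_mem i (idx_of m) = m i.
Proof.
rewrite /idx_of count_flatten -map_comp sumnE big_map /=.
under eq_bigr do rewrite count_nseq /=.
have [Hi|Hi] := boolP (i \in finsupp m).
  rewrite (bigD1_seq i) //= ?fset_uniq // eqxx mul1n big1 ?addn0 // => j /negbTE.
  by rewrite eq_sym => ->.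
rewrite big1_seq; last first.
  move=> j /andP[_ Hj]; case: eqP => // E; subst; by rewrite Hj in Hi.
by apply/esym/eqP; rewrite cmE_eq0.
Qed.

Lemma monom_of_idx m : monom_of (idx_of m) = m.
Proof. by apply/eqP/cmP=> i; rewrite monom_ofE count_idx_of. Qed.

Lemma mdeg_monom_of s : mdeg (monom_of s) = size s.
Proof.
elim: s => [|x s IH] /=; first exact: mdeg1.
by rewrite (mdegM (ucm x) (monom_of s)) mdegU IH.
Qed.

Lemma size_idx_of m : size (idx_of m) = mdeg m.
Proof. by rewrite -{2}(monom_of_idx m) mdeg_monom_of. Qed.

Definition lmax (s : seq nat) := (\max_(x <- s) x)%N.

Lemma maxidx_monom_of s : maxidx (monom_of s) = lmax s.
Proof.
rewrite /maxidx /lmax; apply: eq_big_idem; first exact: maxnn.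
move=> i; rewrite -cmE_neq0 monom_ofE; apply/idP/idP.
  by apply: contraR => /count_memPn ->.
by rewrite -lt0n -has_count has_pred1.
Qed.

Lemma maxidx_idx m : maxidx m = lmax (idx_of m).
Proof. by rewrite -maxidx_monom_of monom_of_idx. Qed.

Lemma nth_le_lmax s p : (nth 0 s p <= lmax s)%N.
Proof.
case: (ltnP p (size s)) => Hp; last by rewrite nth_default.
by rewrite /lmax; apply: (@leq_bigmax_seq _ s xpredT (fun x => x)) => //; apply: mem_nth.
Qed.

Lemma mem_le_lmax s x : x \in s -> (x <= lmax s)%N.
Proof. by move=> Hx; rewrite /lmax; apply: (@leq_bigmax_seq _ s xpredT (fun x => x)). Qed.

Lemma lmax_le s b : (forall x, x \in s -> x <= b)%N -> (lmax s <= b)%N.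
Proof. by move=> H; apply/bigmax_leqP_seq => x Hx _; apply: H. Qed.

Lemma nth_incr s i p : nth 0 (incr_at s i) p = (nth 0 s p + (p == i))%N.
Proof. by rewrite /incr_at nth_set_nth /=; case: eqP => [->|]; rewrite ?addn1 ?addn0. Qed.

Lemma size_incr s i : (i < size s)%N -> size (incr_at s i) = size s.
Proof. by move=> Hi; rewrite /incr_at size_set_nth; apply/maxn_idPr. Qed.

Lemma incr2_props s (i j : nat) : (i < j)%N -> (j < size s)%N ->
  size (incr_at (incr_at s i) j) = size s /\
  (lmax (incr_at (incr_at s i) j) <= lmax s + 1)%N.
Proof.
move=> Hij Hj.
have Hi : (i < size s)%N by apply: ltn_trans Hj.
have Hs : size (incr_at (incr_at s i) j) = size s.
  by rewrite !size_incr // size_incr.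
split => //; apply: lmax_le => x /(nthP 0) [p Hp <-].
rewrite !nth_incr -addnA leq_add ?nth_le_lmax //.
case: (eqVneq p i) => [->|_] /=; last by case: (p == j).
by rewrite (ltn_eqF Hij).
Qed.

Lemma H_props s (k l : nat) : (k < size s)%N -> (1 <= l < nth 0 s k)%N ->
  let t := ((1 + l) :: (1 + (nth 0 s k - l)) :: (take k s ++ drop k.+1 s))%N in
  size t = (size s).+1 /\ (lmax t <= lmax s)%N.
Proof.
move=> Hk /andP[Hl1 Hl2] t; split.
  rewrite /t /= size_cat size_take size_drop Hk; apply/eqP.
  by rewrite eqSS -addSn addnC subnK.
have Ha := nth_le_lmax s k.
apply: lmax_le => x; rewrite /t !inE => /or3P [/eqP->|/eqP->|].
- by apply: (leq_trans _ Ha); rewrite add1n.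
- by apply: (leq_trans _ Ha); lia.
- by rewrite mem_cat => /orP [/mem_take|/mem_drop] /mem_le_lmax.
Qed.

Local Open Scope ring_scope.
Local Notation mpol := {malg rat[cmonom nat]}.

Definition nnc (P : cmonom nat -> Prop) (q : mpol) :=
  forall m, 0 <= q@_m /\ (q@_m != 0 -> P m).

Lemma nnc0 P : nnc P 0.
Proof. by move=> m; rewrite mcoeff0 eqxx. Qed.

Lemma nncD P q1 q2 : nnc P q1 -> nnc P q2 -> nnc P (q1 + q2).
Proof.
move=> H1 H2 m; have [a1 b1] := H1 m; have [a2 b2] := H2 m.
rewrite mcoeffD addr_ge0 //; split => // Hn.
have [/eqP E|] := boolP (q1@_m == 0); last exact: b1.
by apply: b2; move: Hn; rewrite E add0r.
Qed.

Lemma nncZ P c q : 0 <= c -> nnc P q -> nnc P (c *: q).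
Proof.
move=> Hc H m; have [a b] := H m; rewrite mcoeffZ mulr_ge0 //; split => //.
by rewrite mulf_eq0 negb_or => /andP[_ /b].
Qed.

Lemma nncT P s : P (monom_of s) -> nnc P (T_ s).
Proof.
move=> Hp m; rewrite /T_ mcoeffU1.
have [<-|ne] := eqVneq (monom_of s) m; first by rewrite ler01 oner_eq0.
by rewrite eqxx.
Qed.

Lemma nnc_sum (I : Type) (r : seq I) (Q : pred I) (F : I -> mpol) P :
  (forall i, Q i -> nnc P (F i)) -> nnc P (\sum_(i <- r | Q i) F i).
Proof. move=> H; apply: big_ind => //; [exact: nnc0 | exact: nncD]. Qed.

Lemma nnc_L s : nnc (fun m => mdeg m = size s /\ (maxidx m <= lmax s + 1)%N) (L_mon s).
Proof.
apply: nnc_sum => i _; apply: nnc_sum => j Hij; apply: nncT.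
have [E1 E2] := incr2_props Hij (ltn_ord j).
by rewrite mdeg_monom_of maxidx_monom_of.
Qed.

Definition H_in (s : seq nat) : mpol :=
    \sum_(k < size s)
      \sum_(1 <= l < nth 0%N s k)
        ('C(nth 0%N s k, l))%:R *:
          T_ ((1 + l)%N :: (1 + (nth 0%N s k - l))%N :: (take k s ++ drop k.+1 s)).

Lemma H_monE s : H_mon s = (- (1 / 2%:R)) *: H_in s.
Proof. by []. Qed.

Lemma nnc_H s : nnc (fun m => mdeg m = (size s).+1 /\ (maxidx m <= lmax s)%N) (H_in s).
Proof.
apply: nnc_sum => k _; rewrite big_nat; apply: nnc_sum => l Hl.
apply: nncZ; first exact: ler0n.
apply: nncT; have [E1 E2] := H_props (ltn_ord k) Hl.
by rewrite mdeg_monom_of maxidx_monom_of.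
Qed.

Lemma monom_of_cat s1 s2 : monom_of (s1 ++ s2) = mulcm (monom_of s1) (monom_of s2).
Proof. by apply/eqP/cmP=> i; rewrite mulcmE !monom_ofE count_cat. Qed.

Lemma T_mul s1 s2 : T_ s1 * T_ s2 = T_ (s1 ++ s2).
Proof. rewrite /T_ malgM_def fgmulUU mulr1 monom_of_cat. reflexivity. Qed.

Definition A_in (n : nat) : mpol :=
  \sum_(1 <= k < n) ('C(n, k))%:R *: T_ [:: (1 + k)%N; (1 + (n - k))%N; n].

Lemma A_E n : A n = - A_in n.
Proof.
rewrite /A /A_in.
apply/eqP; rewrite eqr_opp; apply/eqP.
apply: eq_bigr => k _.
by rewrite /T !T_mul /=.
Qed.

Lemma nnc_A n : nnc (fun m => mdeg m = 3%N /\ (maxidx m <= n)%N) (A_in n).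
Proof.
rewrite /A_in big_nat; apply: nnc_sum => k /andP[H1 H2].
apply: nncZ; first exact: ler0n.
apply: nncT; rewrite mdeg_monom_of maxidx_monom_of; split => //.
apply: lmax_le => x; rewrite !inE => /or3P [] /eqP ->; lia.
Qed.

Definition sgn (m : cmonom nat) : rat := (-1) ^+ mdeg m.

Lemma sgn_sq m : sgn m * sgn m = 1.
Proof. by rewrite /sgn -exprMn mulrNN mulr1 expr1n. Qed.

Lemma sgn_nz m : sgn m != 0.
Proof. by rewrite /sgn signr_eq0. Qed.

Definition Good (B : cmonom nat -> Prop) (p : mpol) :=
  forall m, 0 <= sgn m * p@_m /\ (p@_m != 0 -> B m).

Lemma GoodD B p q : Good B p -> Good B q -> Good B (p + q).
Proof.
move=> H1 H2 m; have [a1 b1] := H1 m; have [a2 b2] := H2 m.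
rewrite mcoeffD mulrDr addr_ge0 //; split => // Hn.
have [/eqP E|] := boolP (p@_m == 0); last exact: b1.
by apply: b2; move: Hn; rewrite E add0r.
Qed.

Lemma sum_nz (I : eqType) (r : seq I) (F : I -> rat) :
  \sum_(i <- r) F i != 0 -> exists2 i, i \in r & F i != 0.
Proof.
move=> H; have [/hasP [i Hi Hn]|/hasPn Hn] := boolP (has (fun i => F i != 0) r).
  by exists i.
by move: H; rewrite big1_seq ?eqxx // => i /andP[_ /Hn]; rewrite negbK => /eqP.
Qed.

Lemma coef_Lop p m' : (Lop p)@_m' = \sum_(m <- msupp p) p@_m * (L_mon (idx_of m))@_m'.
Proof. rewrite /Lop raddf_sum; apply: eq_bigr => m _; exact: mcoeffZ. Qed.

Lemma coef_Hop p m' : (Hop p)@_m' = \sum_(m <- msupp p) p@_m * (H_mon (idx_of m))@_m'.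
Proof. rewrite /Hop raddf_sum; apply: eq_bigr => m _; exact: mcoeffZ. Qed.

Lemma Lterm B p m m' : Good B p ->
  0 <= sgn m' * (p@_m * (L_mon (idx_of m))@_m') /\
  (p@_m * (L_mon (idx_of m))@_m' != 0 ->
     mdeg m' = mdeg m /\ (maxidx m' <= maxidx m + 1)%N /\ B m).
Proof.
move=> HG; have [a b] := HG m; have [c d] := nnc_L (idx_of m) m'.
have [E|Hne] := eqVneq (L_mon (idx_of m))@_m' 0.
  by rewrite E mulr0 mulr0 eqxx.
have [D M] := d Hne; rewrite size_idx_of in D; rewrite -maxidx_idx in M.
rewrite /sgn D -/(sgn m) mulrA mulr_ge0 //; split => //.
by rewrite mulf_eq0 negb_or => /andP[/b Hb _].
Qed.

Lemma Hterm B p m m' : Good B p ->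
  0 <= sgn m' * (p@_m * (H_mon (idx_of m))@_m') /\
  (p@_m * (H_mon (idx_of m))@_m' != 0 ->
     mdeg m' = (mdeg m).+1 /\ (maxidx m' <= maxidx m)%N /\ B m).
Proof.
move=> HG; have [a b] := HG m; have [c d] := nnc_H (idx_of m) m'.
rewrite H_monE mcoeffZ.
have [E|Hne] := eqVneq (H_in (idx_of m))@_m' 0.
  by rewrite E !mulr0 eqxx.
have [D M] := d Hne; rewrite size_idx_of in D; rewrite -maxidx_idx in M.
rewrite /sgn D exprS -/(sgn m).
have -> : -1 * sgn m * (p@_m * (- (1 / 2%:R) * (H_in (idx_of m))@_m'))
        = (sgn m * p@_m) * ((1 / 2%:R) * (H_in (idx_of m))@_m') by ring.
rewrite mulr_ge0 // ?mulr_ge0 //; split => //.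
by rewrite mulf_eq0 negb_or => /andP[/b Hb _].
Qed.

Lemma Good_Lop b p : Good (fun m => (maxidx m + mdeg m <= b)%N) p ->
  Good (fun m => (maxidx m + mdeg m <= b.+1)%N) (Lop p).
Proof.
move=> HG m'; rewrite coef_Lop mulr_sumr; split.
  by apply: sumr_ge0 => m _; have [] := Lterm m m' HG.
move=> /sum_nz [m _ Hm].
have [_ /(_ Hm) [D [M Bm]]] := Lterm m m' HG; lia.
Qed.

Lemma Good_Hop b p : Good (fun m => (maxidx m + mdeg m <= b)%N) p ->
  Good (fun m => (maxidx m + mdeg m <= b.+1)%N) (Hop p).
Proof.
move=> HG m'; rewrite coef_Hop mulr_sumr; split.
  by apply: sumr_ge0 => m _; have [] := Hterm m m' HG.
move=> /sum_nz [m _ Hm].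
have [_ /(_ Hm) [D [M Bm]]] := Hterm m m' HG; lia.
Qed.

Lemma Good_A n : Good (fun m => (maxidx m + mdeg m <= n + 3)%N) (A n).
Proof.
move=> m; rewrite A_E mcoeffN; have [c d] := nnc_A n m.
have [E|Hne] := eqVneq (A_in n)@_m 0.
  by rewrite E oppr0 mulr0 eqxx.
have [D M] := d Hne; rewrite /sgn D.
have -> : (-1) ^+ 3 * - (A_in n)@_m = (A_in n)@_m by rewrite !exprS expr0; ring.
split => // _; lia.
Qed.

Lemma Good_R n : Good (fun m => (maxidx m + mdeg m <= n + 3)%N) (R n.+1).
Proof.
elim: n => [|n IH].
  by move=> m /=; rewrite mcoeff0 mulr0 eqxx.
rewrite [R _]/= /=.
case: ifP => _.
  by move=> m; rewrite mcoeff0 mulr0 eqxx.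
apply: GoodD; first apply: GoodD.
- exact: Good_A.
- by rewrite addSn; apply: Good_Lop.
- by rewrite addSn; apply: Good_Hop.
Qed.

Lemma sum_ge_term (I : eqType) (r : seq I) (Q : pred I) (F : I -> rat) i0 :
  i0 \in r -> Q i0 -> (forall i, Q i -> 0 <= F i) ->
  F i0 <= \sum_(i <- r | Q i) F i.
Proof.
move=> Hi Hq Hpos; elim: r Hi => [//|x r IH]; rewrite inE big_cons.
have Hs : 0 <= \sum_(i <- r | Q i) F i by apply: sumr_ge0.
case: (eqVneq i0 x) => [<- _|_ /= /IH Hr]; first by rewrite Hq lerDl.
case Hqx: (Q x) => //. rewrite -[F i0]add0r lerD ?Hpos //.
Qed.

Lemma Good_pos B p m : Good B p -> p@_m != 0 -> 0 < sgn m * p@_m.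
Proof.
move=> HG Hn; have [a _] := HG m.
by rewrite lt_def a andbT mulf_eq0 negb_or sgn_nz.
Qed.

Lemma R_S n : (2 <= n)%N -> R n.+1 = A n + Lop (R n) + Hop (R n).
Proof. by move=> H; rewrite [in LHS]/= ltnNge H. Qed.

Lemma Good_Rn n : (1 <= n)%N -> Good (fun m => (maxidx m + mdeg m <= n.-1 + 3)%N) (R n).
Proof. by case: n => // n _; apply: Good_R. Qed.

Definition Mon m0 j := monom_of (nseq j.+1 2%N ++ [:: m0; m0]).

Lemma count_split s k i : (k < size s)%N ->
  count_mem i s = ((nth 0%N s k == i) + count_mem i (take k s ++ drop k.+1 s))%N.
Proof.
move=> Hk; rewrite -{1}(cat_take_drop k s) (drop_nth 0 Hk) !count_cat /=.
rewrite /pred1 /=. ring.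
Qed.

Lemma coef_sum (I : Type) (r : seq I) (Q : pred I) (F : I -> mpol) m :
  (\sum_(i <- r | Q i) F i)@_m = \sum_(i <- r | Q i) (F i)@_m.
Proof. exact: raddf_sum. Qed.

Lemma coefT_ge0 s m : 0 <= (T_ s)@_m.
Proof. by rewrite /T_ mcoeffU1 ler0n. Qed.

Lemma A_in_pos m0 : (2 <= m0)%N -> 0 < (A_in m0)@_(Mon m0 0).
Proof.
move=> Hm; rewrite /A_in coef_sum.
have Hin : (1 \in index_iota 1 m0)%N by rewrite mem_index_iota; lia.
apply: lt_le_trans (sum_ge_term Hin isT _); last first.
  by move=> k _; rewrite mcoeffZ mulr_ge0 ?ler0n ?coefT_ge0.
rewrite mcoeffZ /T_ mcoeffU1.
have -> : monom_of [:: (1 + 1)%N; (1 + (m0 - 1))%N; m0] = Mon m0 0.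
  rewrite /Mon /=; have -> : (1 + (m0 - 1) = m0)%N by lia.
  by [].
rewrite eqxx mulr1 bin1 ltr0n; lia.
Qed.

Lemma H_in_pos m0 j : (2 <= m0)%N -> 0 < (H_in (idx_of (Mon m0 j)))@_(Mon m0 j.+1).
Proof.
move=> Hm; set s := idx_of (Mon m0 j).
have Hms : m0 \in s.
  by rewrite -has_pred1 has_count count_idx_of /Mon monom_ofE count_cat /= eqxx; lia.
have Hk : (index m0 s < size s)%N by rewrite index_mem.
have Hnth : nth 0%N s (index m0 s) = m0 by rewrite nth_index.
rewrite /H_in coef_sum.
apply: lt_le_trans (sum_ge_term (mem_index_enum (Ordinal Hk)) isT _); last first.
  move=> k _; rewrite coef_sum; apply: sumr_ge0 => l _.
  by rewrite mcoeffZ mulr_ge0 ?ler0n ?coefT_ge0.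
rewrite /= coef_sum Hnth.
have Hin : (1 \in index_iota 1 m0)%N by rewrite mem_index_iota; lia.
apply: lt_le_trans (sum_ge_term Hin isT _); last first.
  by move=> l _; rewrite mcoeffZ mulr_ge0 ?ler0n ?coefT_ge0.
rewrite mcoeffZ /T_ mcoeffU1.
have -> : monom_of [:: (1 + 1)%N, (1 + (m0 - 1))%N
              & take (index m0 s) s ++ drop (index m0 s).+1 s] = Mon m0 j.+1.
  apply: monom_of_count => i.
  have := count_split i Hk; rewrite Hnth count_idx_of monom_ofE.
  rewrite /= !count_cat /= /pred1 /=.
  have -> : (1 + (m0 - 1) = m0)%N by lia.
  lia.
rewrite eqxx mulr1 bin1 ltr0n; lia.
Qed.

Lemma sum3_nz B1 B2 B3 p q r m : Good B1 p -> Good B2 q -> Good B3 r ->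
  [|| p@_m != 0, q@_m != 0 | r@_m != 0] -> (p + q + r)@_m != 0.
Proof.
move=> G1 G2 G3 H.
suff : 0 < sgn m * (p + q + r)@_m by apply: contraTneq => ->; rewrite mulr0 ltxx.
have [a1 _] := G1 m; have [a2 _] := G2 m; have [a3 _] := G3 m.
rewrite !mcoeffD !mulrDr.
case/or3P: H => H.
- by have := Good_pos G1 H; move=> h; rewrite -addrA ltr_pwDl ?addr_ge0.
- by have := Good_pos G2 H; move=> h; rewrite (addrC (_ * p@_m)) -addrA ltr_pwDl ?addr_ge0.
- by have := Good_pos G3 H; move=> h; rewrite addrC ltr_pwDl ?addr_ge0.
Qed.

Lemma Hop_nz B p M t : Good B p -> p@_M != 0 -> (H_mon (idx_of M))@_t != 0 -> (Hop p)@_t != 0.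
Proof.
move=> HG HM Ht; rewrite coef_Hop.
suff : 0 < sgn t * \sum_(m <- msupp p) p@_m * (H_mon (idx_of m))@_t.
  by apply: contraTneq => ->; rewrite mulr0 ltxx.
rewrite mulr_sumr.
have Hin : M \in msupp p by rewrite -mcoeff_neq0.
have Hpos : forall m, xpredT m -> 0 <= sgn t * (p@_m * (H_mon (idx_of m))@_t).
  by move=> m _; have [] := Hterm m t HG.
apply: lt_le_trans (sum_ge_term Hin isT Hpos).
have Gp : Good (fun _ => True) (p@_M *: H_mon (idx_of M)).
  move=> m'; rewrite mcoeffZ; have [a _] := Hterm M m' HG.
  by split.
suff Hnz : (p@_M *: H_mon (idx_of M))@_t != 0.
  have E : (p@_M *: H_mon (idx_of M))@_t = p@_M * (H_mon (idx_of M))@_t := mcoeffZ _ _ _.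
  by rewrite -E; apply: Good_pos Gp Hnz.
by rewrite (mcoeffZ (p@_M) (H_mon (idx_of M))) mulf_neq0.
Qed.

Lemma R_nz m0 j : (2 <= m0)%N -> (R (m0 + j).+1)@_(Mon m0 j) != 0.
Proof.
move=> Hm; elim: j => [|j IH].
  rewrite addn0 R_S //.
  have G := Good_Rn (n := m0) (ltnW Hm).
  apply: (sum3_nz (Good_A m0) (Good_Lop G) (Good_Hop G)).
  by rewrite A_E mcoeffN oppr_eq0 (gt_eqF (A_in_pos Hm)).
rewrite addnS R_S; last lia.
have G := Good_Rn (n := (m0 + j).+1) isT.
apply: (sum3_nz (Good_A _) (Good_Lop G) (Good_Hop G)).
apply/orP; right; apply/orP; right.
apply: (Hop_nz (Good_R (m0 + j)) IH).
by rewrite H_monE mcoeffZ mulf_eq0 negb_or (gt_eqF (H_in_pos j Hm)) andbT oppr_eq0 mulf_neq0 // invr_eq0 pnatr_eq0.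
Qed.

Lemma max_mem (s : seq nat) : (0 < \max_(x <- s) x)%N -> (\max_(x <- s) x) \in s.
Proof.
elim: s => [|x s IH]; first by rewrite big_nil.
rewrite big_cons inE => H.
case: (leqP x (\max_(y <- s) y)) => Hx.
  by rewrite (maxn_idPr Hx) in H; rewrite IH ?orbT.
by rewrite eqxx.
Qed.

Lemma maxidx_in (m : cmonom nat) (c : nat) : (0 < c)%N -> maxidx m = c -> (0 < m c)%N.
Proof.
move=> Hc Hm; have : c \in finsupp m by rewrite -Hm; apply: max_mem; rewrite /maxidx in Hm; rewrite Hm.
by rewrite -cmE_neq0 lt0n.
Qed.

Lemma divcmK (m : cmonom nat) (c : nat) : (0 < m c)%N -> mulcm (divcm m (ucm c)) (ucm c) = m.
Proof.
move=> H; apply/eqP/cmP => i; rewrite mulcmE divcmE ucmE.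
case: eqP => [<-|_]; last by rewrite subn0 addn0.
by rewrite subnK.
Qed.

Lemma mdeg_divcm (m : cmonom nat) (c : nat) : (0 < m c)%N -> mdeg (divcm m (ucm c)) = (mdeg m).-1.
Proof.
move=> H; rewrite -{2}(divcmK H).
by rewrite (mdegM (divcm m (ucm c)) (ucm c)) mdegU addn1.
Qed.

Lemma mdeg_Mon m0 j : mdeg (Mon m0 j) = (j + 3)%N.
Proof. by rewrite /Mon mdeg_monom_of size_cat size_nseq /=; lia. Qed.

Lemma maxidx_Mon m0 j : (2 <= m0)%N -> maxidx (Mon m0 j) = m0.
Proof.
move=> Hm; rewrite /Mon maxidx_monom_of; apply/eqP; rewrite eqn_leq; apply/andP; split.
  apply: lmax_le => x; rewrite mem_cat => /orP [/nseqP [-> _] //|].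
  by rewrite !inE => /orP [] /eqP ->.
by apply: mem_le_lmax; rewrite mem_cat mem_head orbT.
Qed.

Lemma msizeU_le (c : rat) (d : cmonom nat) : (msize << c *g d >> <= (mdeg d).+1)%N.
Proof.
rewrite msizeE; apply/bigmax_leqP_seq => m' Hm _.
by have := fsubsetP msuppU_le m' Hm; rewrite inE => /eqP ->.
Qed.

Lemma coef_a n k t' : (a n k)@_t' =
  \sum_(m <- msupp (R n.+1) | maxidx m == (n - k)%N) ((R n.+1)@_m *+ (divcm m (ucm (n - k)%N) == t')).
Proof. rewrite /a raddf_sum; apply: eq_bigr => m _; exact: mcoeffU. Qed.

Section Final.
Variables (n k : nat).
Hypotheses (Hn : (3 <= n)%N) (Hk : (k <= n - 2)%N).

Let m0 := (n - k)%N.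
Let M := Mon m0 k.
Let u := ucm m0.
Let t := divcm M u.

Lemma Hm0 : (2 <= m0)%N. Proof. rewrite /m0; lia. Qed.
Lemma Hnk : n = (m0 + k)%N. Proof. rewrite /m0; lia. Qed.

Lemma coef_a_t : (a n k)@_t = (R n.+1)@_M.
Proof.
rewrite coef_a.
have HM : M \in msupp (R n.+1) by rewrite -mcoeff_neq0 /M Hnk; apply: R_nz; exact: Hm0.
have HMx : maxidx M = m0 by apply: maxidx_Mon; exact: Hm0.
have HMf : M \in [seq m <- msupp (R n.+1) | maxidx m == (n - k)%N].
  by rewrite mem_filter HM HMx eqxx.
rewrite -big_filter (bigD1_seq M HMf (filter_uniq _ (fset_uniq _))).
rewrite eqxx mulr1n big1_seq; first exact: addr0.
move=> m /andP [Hne].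
rewrite mem_filter => /andP [/eqP Hmx Hin].
have Hmc : (0 < m m0)%N by apply: (maxidx_in _ Hmx); rewrite /m0; lia.
have HMc : (0 < M m0)%N by apply: (maxidx_in _ HMx); rewrite /m0; lia.
case: eqP => [E|]; last by rewrite mulr0n.
by move: Hne; rewrite -(divcmK Hmc) -(divcmK HMc) -/u E eqxx.
Qed.

Lemma a_nz : (a n k)@_t != 0.
Proof. by rewrite coef_a_t /M Hnk; apply: R_nz; exact: Hm0. Qed.

Lemma mdeg_t : mdeg t = (k + 2)%N.
Proof.
rewrite /t mdeg_divcm ?mdeg_Mon ?addnS //.
by apply: (maxidx_in _ (maxidx_Mon _ Hm0)); rewrite /m0; lia.
Qed.

Lemma msize_a_le : (msize (a n k) <= k + 3)%N.
Proof.
apply: leq_trans (msize_sum _ _ _) _.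
apply/bigmax_leqP_seq => m Hin /eqP Hmx.
apply: leq_trans (msizeU_le _ _) _.
have Hmc : (0 < m (n - k)%N)%N by apply: (maxidx_in _ Hmx); lia.
rewrite mdeg_divcm //.
have [_ Hb] := Good_R n m.
have := Hb; rewrite mcoeff_neq0 => /(_ Hin).
lia.
Qed.

End Final.

Unset Implicit Arguments.
Local Close Scope ring_scope.

Theorem mainTheorem12 (n k : nat) :
  (3 <= n)%N -> (k <= n - 2)%N -> (a n k != 0)%R /\ totdeg (a n k) = (2 + k)%N.
Proof.
move=> Hn Hk.
have Hnz := a_nz Hn Hk.
split; first by apply: contraNneq Hnz => ->; rewrite mcoeff0.
rewrite mcoeff_neq0 in Hnz.
have Hlt := msize_mdeg_lt Hnz.
have Hle := msize_a_le Hn Hk.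
have Hd := mdeg_t Hn Hk.
rewrite /totdeg; lia.
Qed.
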